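(* Let $k\ge1$, let $a\le b$ be integers, and let $W=(w_1,\dots,w_k)$, $W'=(w'_1,\dots,w'_k)\in(\mathbb C\setminus\{0,-1\})^k$ with $w_i\ne w'_{i'}$ for all $i,i'$. Define $$\hat S_{a,b}(W,W')=\sum_{a\le x_1\le\cdots\le x_k\le b}\det\big[(w_i+1)^{x_j}w_i^j\big]_{i,j=1}^k\det\big[(w'_i+1)^{-x_j}(w'_i)^{-j}\big]_{i,j=1}^k,$$ the sum over integers $x_1,\dots,x_k$. Then $$\hat S_{a,b}(W,W')=\det\Big[\frac{1}{-w_i+w'_{i'}}\cdot\frac{w_i(w_i+1)^a}{w'_{i'}(w'_{i'}+1)^{a-1}}+\frac{1}{w_i-w'_{i'}}\cdot\frac{w_i^k(w_i+1)^{b+1}}{(w'_{i'})^k(w'_{i'}+1)^b}\Big]_{i,i'=1}^k.$$ *)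

(* Defs.v *)
From mathcomp Require Import all_boot all_order all_algebra.
Set Implicit Arguments. Unset Strict Implicit. Unset Printing Implicit Defensive.
Import Order.TTheory GRing.Theory Num.Theory.
Local Open Scope ring_scope.

(* Weakly increasing integer tuples a <= x_1 <= ... <= x_k <= b are encoded as
   x_j = a + o_j with o : {ffun 'I_k -> 'I_(n+1)}, n = `|b - a|, o nondecreasing. *)
Definition incr_tuples (k n : nat) : {set {ffun 'I_k -> 'I_n.+1}} :=
  [set o : {ffun 'I_k -> 'I_n.+1} | [forall i : 'I_k, forall j : 'I_k, (i <= j)%N ==> (o i <= o j)%N]].

Definition Shat (C : numClosedFieldType) (k : nat) (a b : int)
    (W W' : 'I_k -> C) : C :=
  \sum_(o in incr_tuples k `|b - a|%N)
    let x := fun j : 'I_k => (a + (o j)%:Z)%R in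
    \det (\matrix_(i < k, j < k) ((W i + 1) ^ (x j) * W i ^+ j.+1)) *
    \det (\matrix_(i < k, j < k) ((W' i + 1) ^ (- x j) * (W' i) ^- j.+1)).

(* Main.v *)
Require Import Defs.
From mathcomp Require Import all_boot all_order all_algebra.
From mathcomp Require Import ring.
Set Implicit Arguments. Unset Strict Implicit. Unset Printing Implicit Defensive.
Import Order.TTheory GRing.Theory Num.Theory.
Local Open Scope ring_scope.

Section ML.
Variable C : fieldType.

Definition setrow n (M : 'M[C]_n) (i0 : 'I_n) (d : 'I_n -> C) : 'M[C]_n :=
  \matrix_(i, j) (if i == i0 then d j else M i j).

Lemma ML n (c d : 'I_n -> C) s (M : 'M[C]_n) :
  \det (\matrix_(i, j) (M i j + (if (i < s)%N then c i * d j else 0))) =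
  \det M + \sum_(i < n | (i < s)%N) c i * \det (setrow M i d).
Proof.
elim: s M => [|s IH] M.
  rewrite big_pred0 // addr0; congr (\det _); apply/matrixP=> i j.
  by rewrite mxE ltn0 addr0.
case: (ltnP s n) => [hs|hs]; last first.
  have E : forall i : 'I_n, (i < s.+1)%N = (i < s)%N.
    move=> i; have := ltn_ord i => hi.
    by rewrite ltnS leq_eqVlt; case: eqP => //= ei; move: hi; rewrite ei ltnNge hs.
  rewrite (eq_bigl (fun i : 'I_n => (i < s)%N)) // -IH; congr (\det _).
  by apply/matrixP=> i j; rewrite !mxE E.
set i0 := Ordinal hs.
pose B := \matrix_(i, j) (M i j + (if (i < s)%N then c i * d j else 0)).
have h1 : forall i : 'I_n, i != i0 -> (i < s.+1)%N = (i < s)%N.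
  move=> i; rewrite -(inj_eq val_inj) /= => ne.
  by rewrite ltnS leq_eqVlt (negbTE ne).
have hi0 : (i0 < s)%N = false by rewrite ltnn.
rewrite (@determinant_multilinear _ _ _ B (setrow B i0 d) i0 1 (c i0)).
- rewrite mul1r IH [in RHS](bigD1 i0) /=; last by rewrite ltnSn.
  rewrite [in RHS](eq_bigl (fun i : 'I_n => (i < s)%N)); last first.
    move=> i /=; case: (eqVneq i i0) => [->|ne]; first by rewrite hi0 andbF.
    by rewrite andbT h1.
  rewrite -addrA [X in _ + X]addrC; congr (_ + (_ * _ + _)).
  have -> : setrow B i0 d = \matrix_(i, j) (setrow M i0 d i j + (if (i < s)%N then c i * d j else 0)).
    by apply/matrixP=> i j; rewrite !mxE; case: eqP => // ->; rewrite hi0 addr0.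
  rewrite IH big1 ?addr0 //.
  move=> i lis; apply/eqP; rewrite mulf_eq0; apply/orP; right; apply/eqP.
  apply: (@determinant_alternate _ _ _ i i0).
    by rewrite -(inj_eq val_inj) /=; apply: contraTneq lis => ->; rewrite ltnn.
  by move=> j; rewrite !mxE !eqxx; case: eqP => // ei; move: lis; rewrite ei ltnn.
- apply/matrixP=> i j; rewrite !mxE eqxx ltnSn hi0 /=; ring.
- apply/matrixP=> i j; rewrite !mxE.
  by rewrite h1 // eq_sym neq_lift.
- apply/matrixP=> i j; rewrite !mxE.
  by rewrite eq_sym (negbTE (neq_lift _ _)) h1 // eq_sym neq_lift.
Qed.

Lemma ML_full n (c d : 'I_n -> C) (M : 'M[C]_n) :
  \det (\matrix_(i, j) (M i j + c i * d j)) =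
  \det M + \sum_i c i * \det (setrow M i d).
Proof.
have := ML c d n M; rewrite (eq_bigl predT) => [<-|i]; last by rewrite ltn_ord.
by congr (\det _); apply/matrixP=> i j; rewrite !mxE ltn_ord.
Qed.
End ML.
Section WS.
Variable C : nzRingType.

Definition fcons (X : Type) (k : nat) (t : X) (o : {ffun 'I_k -> X}) : {ffun 'I_k.+1 -> X} :=
  [ffun j => if unlift ord0 j is Some j' then o j' else t].
Definition ftail (X : Type) k (o : {ffun 'I_k.+1 -> X}) : {ffun 'I_k -> X} :=
  [ffun j => o (lift ord0 j)].

Lemma fcons0 (X : Type) (k : nat) (t : X) (o : {ffun 'I_k -> X}) : fcons t o ord0 = t :> X.
Proof. by rewrite ffunE unlift_none. Qed.
Lemma fconsS (X : Type) (k : nat) (t : X) (o : {ffun 'I_k -> X}) j : fcons t o (lift ord0 j) = o j.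
Proof. by rewrite ffunE liftK. Qed.

Lemma split_sum (X : finType) k (F : {ffun 'I_k.+1 -> X} -> C) :
  \sum_o F o = \sum_(t : X) \sum_(o : {ffun 'I_k -> X}) F (fcons t o).
Proof.
rewrite pair_big /=.
have c1 : cancel (fun p : X * {ffun 'I_k -> X} => fcons p.1 p.2) (fun o => (o ord0, ftail o)).
  by case=> t o /=; rewrite fcons0; congr (_, _); apply/ffunP=> j; rewrite ffunE fconsS.
have c2 : cancel (fun o : {ffun 'I_k.+1 -> X} => (o ord0, ftail o)) (fun p : X * {ffun 'I_k -> X} => fcons p.1 p.2).
  move=> o /=; apply/ffunP=> j; rewrite ffunE; case: unliftP => [j'|] ->; by rewrite ?ffunE.
by rewrite (reindex (fun p : X * {ffun 'I_k -> X} => fcons p.1 p.2)) //; exists (fun o : {ffun 'I_k.+1 -> X} => (o ord0, ftail o)) => ? _; [exact: c1 | exact: c2].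
Qed.

Definition ncons (t : nat) (y : nat -> nat) : nat -> nat :=
  fun j => if j is j'.+1 then y j' else t.

Fixpoint wsum (k m n : nat) (g : (nat -> nat) -> C) : C :=
  if k is k'.+1 then \sum_(t < n.+1 | (m <= t)%N) wsum k' t n (fun y => g (ncons t y))
  else g (fun _ => 0%N).

Definition Tp k n (m : nat) (o : {ffun 'I_k -> 'I_n.+1}) : bool :=
  [forall i : 'I_k, forall j : 'I_k, (i <= j)%N ==> (o i <= o j)%N] && [forall i : 'I_k, (m <= o i)%N].

Definition ext k n (o : {ffun 'I_k -> 'I_n.+1}) : nat -> nat :=
  fun j => match @insub _ (fun j => j < k)%N _ j with Some j' => nat_of_ord (o j') | None => 0%N end.

Lemma extE k n (o : {ffun 'I_k -> 'I_n.+1}) (j : 'I_k) : ext o j = o j.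
Proof. by rewrite /ext valK. Qed.

Lemma insub_ord k j (H : (j < k)%N) : @insub _ (fun j => j < k)%N _ j = Some (Ordinal H).
Proof. by rewrite insubT; congr Some; apply: val_inj. Qed.

Definition local k (g : (nat -> nat) -> C) :=
  forall x y, (forall j, (j < k)%N -> x j = y j) -> g x = g y.

Lemma Tp_cons k n m (t : 'I_n.+1) (o : {ffun 'I_k -> 'I_n.+1}) :
  Tp m (fcons t o) = (m <= t)%N && Tp t o.
Proof.
apply/idP/idP.
- case/andP=> /forallP H1 /forallP H2; apply/andP; split.
    by have := H2 ord0; rewrite fcons0.
  apply/andP; split.
    apply/forallP=> i; apply/forallP=> j; apply/implyP=> lij.
    have := H1 (lift ord0 i); move/forallP/(_ (lift ord0 j)); rewrite !fconsS.
    by rewrite /= /bump /= !add1n ltnS lij.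
  apply/forallP=> i; have := H1 ord0; move/forallP/(_ (lift ord0 i)).
  by rewrite fcons0 fconsS.
- case/andP=> mt /andP[/forallP H1 /forallP H2]; apply/andP; split.
    apply/forallP=> i; apply/forallP=> j.
    case: (unliftP ord0 i) => [i'|] ->; case: (unliftP ord0 j) => [j'|] ->;
      rewrite ?fcons0 ?fconsS //=.
    by rewrite /bump /= !add1n ltnS; exact: (forallP (H1 i') j').
  apply/forallP=> i; case: (unliftP ord0 i) => [i'|] ->; rewrite ?fcons0 ?fconsS //.
  exact: leq_trans mt (H2 i').
Qed.

Lemma wsumE k : forall m n g, local k g ->
  \sum_(o : {ffun 'I_k -> 'I_n.+1} | Tp m o) g (ext o) = wsum k m n g.
Proof.
elim: k => [|k IH] m n g lg /=.
  rewrite (eq_bigr (fun _ => g (fun _ => 0%N))); last by move=> o _; apply: lg.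
  rewrite sumr_const.
  have -> : #|[pred o : {ffun 'I_0 -> 'I_n.+1} | Tp m o]| = 1%N.
    rewrite (eq_card (B := predT)) ?card_ffun ?card_ord //.
    by move=> o; rewrite !inE /Tp; apply/andP; split; apply/forallP => -[].
  by rewrite mulr1n.
rewrite big_mkcond split_sum /= [RHS]big_mkcond; apply: eq_bigr => t _.
rewrite (eq_bigr (fun o => if (m <= t)%N && Tp t o then g (ncons t (ext o)) else 0)); last first.
  move=> o _; rewrite Tp_cons; case: ifP => // _; apply: lg => j.
  case: j => [|j] ltj.
    rewrite /ext insub_ord /=.
    by rewrite (_ : Ordinal ltj = ord0) ?fcons0 //; apply: val_inj.
  have ltj' : (j < k)%N by [].
  rewrite /ext /= insub_ord /= (insub_ord ltj') /=.
  have -> : Ordinal ltj = lift ord0 (Ordinal ltj') by apply: val_inj.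
  by rewrite fconsS.
case: (m <= t)%N => /=; last by rewrite big1.
rewrite -big_mkcond; apply: IH.
by move=> x y H; apply: lg => -[|j] //= lj; apply: H.
Qed.

Lemma wsum_ext k : forall m n (f g : (nat -> nat) -> C), (forall y, f y = g y) ->
  wsum k m n f = wsum k m n g.
Proof.
elim: k => [|k IH] m n f g H /=; first exact: H.
by apply: eq_bigr => t _; apply: IH => y; apply: H.
Qed.

Lemma wsum_sum (I : finType) k : forall m n (F : I -> (nat -> nat) -> C),
  wsum k m n (fun y => \sum_i F i y) = \sum_i wsum k m n (F i).
Proof.
elim: k => [|k IH] m n F //=.
rewrite exchange_big /=; apply: eq_bigr => t _.
exact: (IH t n (fun i y => F i (ncons t y))).
Qed.

Lemma wsum_scale k : forall m n (c : C) (f : (nat -> nat) -> C),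
  wsum k m n (fun y => c * f y) = c * wsum k m n f.
Proof.
elim: k => [|k IH] m n c f //=.
rewrite mulr_sumr; apply: eq_bigr => t _.
exact: (IH t n c (fun y => f (ncons t y))).
Qed.

Lemma tele (g : nat -> C) m N : (m <= N)%N ->
  \sum_(t < N | (m <= t)%N) (g t - g t.+1) = g m - g N.
Proof.
elim: N => [|N IH]; first by rewrite leqn0 => /eqP ->; rewrite big_ord0 subrr.
rewrite leq_eqVlt => /orP[/eqP ->|]; last first.
  by rewrite ltnS => hm; rewrite big_mkcond big_ord_recr /= -big_mkcond IH // hm addrA subrK.
by rewrite big1 ?subrr // => i hi; move: (ltn_ord i); rewrite ltnNge hi.
Qed.
End WS.
Section Alg.
Variable C : fieldType.

Lemma E1 p (c : int) (w w' : C) : w + 1 != 0 -> w' != 0 -> w' + 1 != 0 -> w != w' ->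
  (- w + w')^-1 * (w ^+ p.+2 * (w + 1) ^ c / (w' ^+ p.+2 * (w' + 1) ^ (c - 1))) +
  ((w + 1) ^ c * w ^+ p.+1) * ((w' + 1) ^ (- c) * w' ^- p.+1 + (w' + 1) ^ (- c) * w' ^- p.+2)
  = (- w + w')^-1 * (w ^+ p.+1 * (w + 1) ^ c / (w' ^+ p.+1 * (w' + 1) ^ (c - 1))).
Proof.
move=> h1 h2 h3 h4.
have hv : (w' + 1) ^ c != 0 by rewrite expfz_neq0.
rewrite expfzDr // -!invr_expz ?expr1z.
have hd : - w + w' != 0 by rewrite addrC subr_eq0 eq_sym.
rewrite !exprSr.
set U := (w + 1) ^ c; set V := (w' + 1) ^ c; set X := w ^+ p; set Y := w' ^+ p.
have hY : Y != 0 by rewrite expf_neq0.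
field.
by rewrite hd hv h3 h2 hY.
Qed.
End Alg.

Section Alg2.
Variable C : fieldType.
Lemma E2 p (c : int) (w w' : C) : w + 1 != 0 -> w' != 0 -> w' + 1 != 0 -> w != w' ->
  (- w + w')^-1 * (w ^+ p.+2 * (w + 1) ^ c / (w' ^+ p.+2 * (w' + 1) ^ (c - 1))) +
  ((w + 1) ^ c * w ^+ p.+1) * ((w' + 1) ^ (- c) * w' ^- p.+2)
  = (- w + w')^-1 * (w ^+ p.+1 * (w + 1) ^ (c + 1) / (w' ^+ p.+1 * (w' + 1) ^ (c + 1 - 1))).
Proof.
move=> h1 h2 h3 h4.
have hv : (w' + 1) ^ c != 0 by rewrite expfz_neq0.
rewrite addrK expfzDr // expfzDr // -!invr_expz ?expr1z.
have hd : - w + w' != 0 by rewrite addrC subr_eq0 eq_sym.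
rewrite !exprSr.
set U := (w + 1) ^ c; set V := (w' + 1) ^ c; set X := w ^+ p; set Y := w' ^+ p.
have hY : Y != 0 by rewrite expf_neq0.
field.
by rewrite hd hv h3 h2 hY.
Qed.

Lemma geo (w w' : C) q k : w' != 0 ->
  (\sum_(s < k) w ^+ (q + s) / w' ^+ (q + s).+1) * (w' - w) =
  w ^+ q / w' ^+ q - w ^+ (q + k) / w' ^+ (q + k).
Proof.
move=> hw; elim: k => [|k IH]; first by rewrite big_ord0 addn0 mul0r subrr.
rewrite big_ord_recr /= mulrDl IH addnS !exprSr.
set X := w ^+ (q + k); set Y := w' ^+ (q + k).
have hY : Y != 0 by rewrite expf_neq0.
have hZ : w' ^+ q != 0 by rewrite expf_neq0.
field; by rewrite hw hY hZ.
Qed.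

Lemma top_entry (w w' X Y : C) q k : w' != 0 -> w != w' -> Y != 0 ->
  (- w + w')^-1 * (w ^+ q * X / (w' ^+ q * Y)) +
  (w - w')^-1 * (w ^+ (q + k) * X / (w' ^+ (q + k) * Y)) =
  \sum_(s < k) (X * w ^+ (q + s)) * (Y^-1 / w' ^+ (q + s).+1).
Proof.
move=> hw hne hY.
have hS := geo w q k hw.
rewrite (eq_bigr (fun s : 'I_k => X / Y * (w ^+ (q + s) / w' ^+ (q + s).+1))); last first.
  by move=> s _; rewrite !mulrA [X * _ * _]mulrAC.
rewrite -mulr_sumr.
have hd : w' - w != 0 by rewrite subr_eq0 eq_sym.
set S := \sum_(s < k) _.
have -> : S = (w ^+ q / w' ^+ q - w ^+ (q + k) / w' ^+ (q + k)) / (w' - w).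
  by rewrite -hS mulfK.
have h1 : w' ^+ q != 0 by rewrite expf_neq0.
have h2 : w' ^+ (q + k) != 0 by rewrite expf_neq0.
have h3 : - w + w' != 0 by rewrite addrC.
have h4 : w - w' != 0 by rewrite subr_eq0.
field. by rewrite hY h1 h2 h4 hd.
Qed.
End Alg2.

Section Main.
Variable C : fieldType.
Variables (a b : int) (n : nat).
Hypothesis hb : b = a + n%:Z.

Definition Pe (p : nat) (c : int) (w w' : C) :=
  (- w + w')^-1 * (w ^+ p.+1 * (w + 1) ^ c / (w' ^+ p.+1 * (w' + 1) ^ (c - 1))).
Definition Ee (q : nat) (w w' : C) :=
  (w - w')^-1 * (w ^+ q * (w + 1) ^ (b + 1) / (w' ^+ q * (w' + 1) ^ b)).
Definition Zm (k p q : nat) (c : int) (W W' : 'I_k -> C) : 'M[C]_k :=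
  \matrix_(i, i') (Pe p c (W i) (W' i') + Ee q (W i) (W' i')).
Definition Amat (k p : nat) (W : 'I_k -> C) (x : nat -> nat) : 'M[C]_k :=
  \matrix_(i, j) ((W i + 1) ^ (a + (x j)%:Z) * W i ^+ (j + p).+1).
Definition Bmat (k p : nat) (W' : 'I_k -> C) (x : nat -> nat) : 'M[C]_k :=
  \matrix_(i, j) ((W' i + 1) ^ (- (a + (x j)%:Z)) * W' i ^- (j + p).+1).
Definition summ (k p : nat) (W W' : 'I_k -> C) (x : nat -> nat) := \det (Amat p W x) * \det (Bmat p W' x).
Definition hyp k (W W' : 'I_k -> C) :=
  [/\ forall i, W i + 1 != 0, forall i, W' i != 0, forall i, W' i + 1 != 0
    & forall i i', W i != W' i'].

Lemma det_thin k (F : 'M[C]_(k.+1, k)) G : \det (F *m G) = 0.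
Proof.
apply/eqP; apply: contraT => nz.
have : F *m G \in unitmx by rewrite unitmxE unitfE.
move/mxrank_unit => h.
by have := leq_trans (mxrankM_maxl F G) (rank_leq_col F); rewrite h ltnn.
Qed.

Lemma Zm_top k p (W W' : 'I_k.+1 -> C) : hyp W W' ->
  \det (Zm p (k.+1 + p) (a + n.+1%:Z) W W') = 0.
Proof.
case=> h1 h2 h3 h4.
pose F : 'M[C]_(k.+1, k) := \matrix_(i, s) ((W i + 1) ^ (b + 1) * W i ^+ (p.+1 + s)).
pose G : 'M[C]_(k, k.+1) :=
  \matrix_(s, i') (((W' i' + 1) ^ b)^-1 / W' i' ^+ (p.+1 + s).+1).
have -> : Zm p (k.+1 + p) (a + n.+1%:Z) W W' = F *m G; last exact: det_thin.
apply/matrixP=> i i'; rewrite !mxE.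
have -> : a + n.+1%:Z = b + 1 by rewrite hb -addn1 PoszD addrA.
rewrite /Pe /Ee addrK addSn -addnS (addnC k) top_entry ?expfz_neq0 //.
by apply: eq_bigr => s _; rewrite !mxE.
Qed.



Lemma LL k p (t : nat) (W W' : 'I_k.+1 -> C) y :
  summ p W W' (ncons t y) =
  \sum_i \sum_i' (((W i + 1) ^ (a + t%:Z) * W i ^+ p.+1) *
                  ((W' i' + 1) ^ (- (a + t%:Z)) * W' i' ^- p.+1) * (-1) ^+ (i + i')) *
     summ p.+1 (fun r => W (lift i r)) (fun r => W' (lift i' r)) y.
Proof.
rewrite /summ (expand_det_col (Amat p W (ncons t y)) ord0).
rewrite (expand_det_col (Bmat p W' (ncons t y)) ord0) big_distrl.
apply: eq_bigr => i _; rewrite big_distrr; apply: eq_bigr => i' _ /=.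
rewrite /cofactor.
have -> : row' i (col' ord0 (Amat p W (ncons t y))) = Amat p.+1 (fun r => W (lift i r)) y.
  by apply/matrixP=> r s; rewrite !mxE lift0 addSnnS.
have -> : row' i' (col' ord0 (Bmat p W' (ncons t y))) = Bmat p.+1 (fun r => W' (lift i' r)) y.
  by apply/matrixP=> r s; rewrite !mxE lift0 addSnnS.
rewrite !mxE /= !addn0 exprD; ring.
Qed.

Lemma cof_setrow k (Z : 'M[C]_k) i j d : cofactor (setrow Z i d) i j = cofactor Z i j.
Proof.
rewrite /cofactor; congr (_ * \det _); apply/matrixP=> r s; rewrite !mxE.
by rewrite eq_sym (negbTE (neq_lift _ _)).
Qed.

Lemma det_setrow k (Z : 'M[C]_k) i d : \det (setrow Z i d) = \sum_j d j * cofactor Z i j.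
Proof.
rewrite (expand_det_row _ i); apply: eq_bigr => j _.
by rewrite cof_setrow mxE eqxx.
Qed.

Lemma KS k p (c : int) (W W' : 'I_k -> C) : hyp W W' ->
  \sum_i ((W i + 1) ^ c * W i ^+ p.+1) *
      \det (setrow (Zm p.+1 (k + p) c W W') i (fun i' => (W' i' + 1) ^ (- c) * W' i' ^- p.+1))
  = \det (Zm p (k + p) c W W') - \det (Zm p (k + p) (c + 1) W W').
Proof.
case=> h1 h2 h3 h4.
set Z := Zm p.+1 (k + p) c W W'.
set al := fun i => (W i + 1) ^ c * W i ^+ p.+1.
set be := fun i' => (W' i' + 1) ^ (- c) * W' i' ^- p.+1.
set ga := fun i' => (W' i' + 1) ^ (- c) * W' i' ^- p.+2.
have e1 : Zm p (k + p) c W W' = \matrix_(i, j) (Z i j + al i * (be j + ga j)).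
  apply/matrixP=> i j; rewrite !mxE /Pe -E1 // /al /be /ga; ring.
have e2 : Zm p (k + p) (c + 1) W W' = \matrix_(i, j) (Z i j + al i * ga j).
  apply/matrixP=> i j; rewrite !mxE /Pe -E2 // /al /ga; ring.
rewrite e1 e2 !ML_full.
have e3 : forall i, \det (setrow Z i (fun j => be j + ga j)) =
    \det (setrow Z i be) + \det (setrow Z i ga).
  by move=> i; rewrite !det_setrow -big_split; apply: eq_bigr => j _; rewrite mulrDl.
under [X in _ = _ + X - _]eq_bigr => i _ do rewrite e3 mulrDr.
rewrite big_split /= /al; ring.
Qed.


Lemma hyp_lift k (W W' : 'I_k.+1 -> C) i i' : hyp W W' ->
  hyp (fun r => W (lift i r)) (fun r => W' (lift i' r)).
Proof. by case=> h1 h2 h3 h4; split=> *. Qed.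

Lemma gen k : forall p m (W W' : 'I_k -> C), hyp W W' -> (m <= n.+1)%N ->
  wsum k m n (summ p W W') = \det (Zm p (k + p) (a + m%:Z) W W').
Proof.
elim: k => [|k IH] p m W W' hW hm.
  by rewrite /= /summ !det_mx00 mulr1.
have step : forall t : 'I_n.+1, wsum k t n (fun y => summ p W W' (ncons t y)) =
   \det (Zm p (k.+1 + p) (a + t%:Z) W W') - \det (Zm p (k.+1 + p) (a + t.+1%:Z) W W').
  move=> t.
  rewrite (wsum_ext _ _ _ (fun y => LL _ _ _ _ y)) wsum_sum.
  under eq_bigr => i _ do rewrite wsum_sum.
  have ht : (t <= n.+1)%N by apply: ltnW.
  under eq_bigr => i _ do under eq_bigr => i' _ do
    rewrite wsum_scale (IH _ _ _ _ (hyp_lift i i' hW) ht).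
  rewrite -[(t.+1)%N]addn1 PoszD addrA -KS //.
  apply: eq_bigr => i _.
  rewrite det_setrow mulr_sumr; apply: eq_bigr => i' _.
  rewrite /cofactor.
  have -> : Zm p.+1 (k + p.+1) (a + t%:Z) (fun r => W (lift i r)) (fun r => W' (lift i' r)) =
            row' i (col' i' (Zm p.+1 (k.+1 + p) (a + t%:Z) W W')).
    by apply/matrixP=> r s; rewrite !mxE addnS addSn.
  by rewrite !mulrA.
rewrite /= (eq_bigr _ (fun t _ => step t)).
rewrite (tele (fun t => \det (Zm p (k.+1 + p) (a + t%:Z) W W'))) //.
by rewrite Zm_top // subr0.
Qed.
End Main.

Theorem mainTheorem10 (C : numClosedFieldType) (k : nat) (a b : int)
    (W W' : 'I_k -> C) :
  (1 <= k)%N -> a <= b ->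
  (forall i, W i != 0 /\ W i != -1) ->
  (forall i, W' i != 0 /\ W' i != -1) ->
  (forall i i', W i != W' i') ->
  Shat a b W W' =
  \det (\matrix_(i < k, i' < k)
     ((- W i + W' i')^-1 *
        (W i * (W i + 1) ^ a / (W' i' * (W' i' + 1) ^ (a - 1))) +
      (W i - W' i')^-1 *
        (W i ^+ k * (W i + 1) ^ (b + 1) / (W' i' ^+ k * (W' i' + 1) ^ b)))).
Proof.
move=> hk hab hW hW' hWW.
set n := `|b - a|%N.
have hb : b = a + n%:Z.
  by rewrite /n abszE ger0_norm ?subr_ge0 // addrCA subrr addr0.
have hy : hyp W W'.
  split=> [i|i|i|i i'] //; first by rewrite addr_eq0; case: (hW i).
    by case: (hW' i).
  by rewrite addr_eq0; case: (hW' i).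
rewrite /Shat (eq_bigl (fun o => Tp 0 o)); last first.
  by move=> o; rewrite inE /Tp (_ : [forall i, 0 <= o i]%N = true) ?andbT //; apply/forallP.
rewrite (eq_bigr (fun o => summ a 0 W W' (ext o))); last first.
  move=> o _ /=; rewrite /summ; congr (_ * _); congr (\det _); apply/matrixP=> i j;
  by rewrite !mxE extE addn0.
rewrite wsumE; last first.
  move=> x y H; rewrite /summ; congr (_ * _); congr (\det _); apply/matrixP=> i j;
  by rewrite !mxE H.
rewrite (gen hb) // addr0; congr (\det _); apply/matrixP=> i j.
by rewrite !mxE /Pe /Ee addn0 !expr1.
Qed.
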